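(* Let $V$ be an upper probability on $(\Omega,\mathcal{F})$ that is continuous from below, and let $\theta:\Omega\to\Omega$ be a measurable map preserving $V$ (i.e. $V(\theta^{-1}A)=V(A)$ for all $A\in\mathcal{F}$). Consider the statements: (i) $\theta$ is ergodic with respect to $V$; (ii) for every $B\in\mathcal{F}$ with $V(\theta^{-1}B\,\triangle\, B)=0$, we have $V(B)=0$ or $V(B^c)=0$; (iii) for every $A\in\mathcal{F}$ with $V(A)>0$, $V\big(\big(\bigcup_{n=1}^{\infty}\theta^{-n}A\big)^{c}\big)=0$; (iv) for all $A,B\in\mathcal{F}$ with $V(A)>0$ and $V(B)>0$ there exists $n\in\mathbb{N}$ with $V(\theta^{-n}A\cap B)>0$. Then (i) and (ii) are equivalent, (iii) implies (iv), and (iv) implies (i). Moreover, if $V$ is continuous, then (ii) implies (iii), so all four statements are equivalent.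
   Context: $\Delta(\Omega,\mathcal{F})$ denotes the set of finitely additive probabilities on $\mathcal{F}$. An upper probability is a set function $V(A)=\sup_{P\in\mathcal{P}}P(A)$, $A\in\mathcal{F}$, for some nonempty $\mathcal{P}\subseteq\Delta(\Omega,\mathcal{F})$. $V$ is continuous from below if $V(A_n)\to V(A)$ whenever $A_n\uparrow A$, and continuous if in addition $V(A_n)\to V(A)$ whenever $A_n\downarrow A$. A set $B\in\mathcal{F}$ is $\theta$-invariant if $\theta^{-1}B=B$. For a capacity $\mu$ (a monotone set function $\mathcal{F}\to[0,1]$ with $\mu(\emptyset)=0,\mu(\Omega)=1$) preserved by $\theta$, $\theta$ is ergodic with respect to $\mu$ if for every $\theta$-invariant set $B$: $\mu(B)\in\{0,1\}$, and $\mu(B)=0$ or $\mu(B^c)=0$. *)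

(* Defs.v *)
From HB Require Import structures.
From mathcomp Require Import all_boot all_order all_algebra.
From mathcomp Require Import all_classical all_reals all_analysis.
Set Implicit Arguments. Unset Strict Implicit. Unset Printing Implicit Defensive.
Import Order.TTheory GRing.Theory Num.Theory.
Import numFieldNormedType.Exports.
Local Open Scope classical_set_scope.
Local Open Scope ring_scope.

Section Defs.
Context {d : measure_display} {T : measurableType d} {R : realType}.

Definition fa_prob (P : set T -> R) : Prop :=
  (forall A, measurable A -> 0 <= P A) /\
  P setT = 1 /\
  (forall A B, measurable A -> measurable B -> A `&` B = set0 ->
     P (A `|` B) = P A + P B).

Definition upper_probability (V : set T -> R) : Prop :=
  exists Ps : set (set T -> R),
    Ps !=set0 /\ (forall P, Ps P -> fa_prob P) /\
    (forall A, measurable A -> V A = sup [set P A | P in Ps]).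

Definition cont_from_below (V : set T -> R) : Prop :=
  forall (An : nat -> set T) (A : set T),
    (forall n, measurable (An n)) -> measurable A ->
    (forall n, An n `<=` An n.+1) -> \bigcup_n An n = A ->
    (fun n => V (An n)) @ \oo --> V A.

Definition cont_from_above (V : set T -> R) : Prop :=
  forall (An : nat -> set T) (A : set T),
    (forall n, measurable (An n)) -> measurable A ->
    (forall n, An n.+1 `<=` An n) -> \bigcap_n An n = A ->
    (fun n => V (An n)) @ \oo --> V A.

Definition continuous_capacity (V : set T -> R) : Prop :=
  cont_from_below V /\ cont_from_above V.

Definition preserves (theta : T -> T) (V : set T -> R) : Prop :=
  forall A, measurable A -> V (theta @^-1` A) = V A.

Definition invariant (theta : T -> T) (B : set T) : Prop :=
  theta @^-1` B = B.

Definition ergodic (theta : T -> T) (mu : set T -> R) : Prop :=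
  forall B, measurable B -> invariant theta B ->
    (mu B = 0 \/ mu B = 1) /\ (mu B = 0 \/ mu (~` B) = 0).

Definition symdiff (A B : set T) : set T := (A `\` B) `|` (B `\` A).

Definition cond_ii (theta : T -> T) (V : set T -> R) : Prop :=
  forall B, measurable B -> V (symdiff (theta @^-1` B) B) = 0 ->
    V B = 0 \/ V (~` B) = 0.

Definition cond_iii (theta : T -> T) (V : set T -> R) : Prop :=
  forall A, measurable A -> 0 < V A ->
    V (~` \bigcup_(n in [set n : nat | (0 < n)%N]) (iter n theta @^-1` A)) = 0.

Definition cond_iv (theta : T -> T) (V : set T -> R) : Prop :=
  forall A B, measurable A -> measurable B -> 0 < V A -> 0 < V B ->
    exists n : nat, (0 < n)%N /\ 0 < V ((iter n theta @^-1` A) `&` B).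

End Defs.

(* Main.v *)
Require Import Defs.
From mathcomp Require Import all_boot all_order all_algebra.
From mathcomp Require Import all_classical all_reals all_analysis.
From mathcomp Require Import lra.
Set Implicit Arguments. Unset Strict Implicit. Unset Printing Implicit Defensive.
Import Order.TTheory GRing.Theory Num.Theory.
Import numFieldNormedType.Exports.
Local Open Scope classical_set_scope.
Local Open Scope ring_scope.

Section FA.
Context {d : measure_display} {T : measurableType d} {R : realType}.
Variable P : set T -> R.
Hypothesis hP : fa_prob P.

Lemma fa0 : P set0 = 0.
Proof.
case: hP => _ [_ add].
have := add set0 set0 measurable0 measurable0 (setI0 _).
rewrite setU0 => h; lra.
Qed.

Lemma fa_mono A B : measurable A -> measurable B -> A `<=` B -> P A <= P B.
Proof.
move=> mA mB AB; case: hP => ge0 [_ add].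
have -> : B = A `|` (B `\` A) by rewrite setDUK.
have mBA : measurable (B `\` A) by exact: measurableD.
rewrite add //; last by rewrite setDE setICA setICr setI0.
by rewrite lerDl ge0.
Qed.

Lemma fa_le1 A : measurable A -> P A <= 1.
Proof. move=> mA; case: hP => _ [<- _]; exact: fa_mono. Qed.

Lemma fa_sub A B : measurable A -> measurable B -> P (A `|` B) <= P A + P B.
Proof.
move=> mA mB; case: hP => ge0 [_ add].
have -> : A `|` B = A `|` (B `\` A) by rewrite setDE setUIr setUv setIT.
have mBA : measurable (B `\` A) by exact: measurableD.
rewrite add //; last by rewrite setDE setICA setICr setI0.
by rewrite lerD2l fa_mono.
Qed.

Lemma fa_compl A : measurable A -> P A + P (~` A) = 1.
Proof.
move=> mA; case: hP => _ [one add].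
by rewrite -add ?setUv ?setICr //; exact: measurableC.
Qed.
End FA.
Section UP.
Context {d : measure_display} {T : measurableType d} {R : realType}.
Variables (V : set T -> R) (Ps : set (set T -> R)).
Hypotheses (Ps0 : Ps !=set0) (PsP : forall P, Ps P -> fa_prob P)
  (VE : forall A, measurable A -> V A = sup [set P A | P in Ps]).

Lemma V_ge P A : Ps P -> measurable A -> P A <= V A.
Proof.
move=> PsP0 mA; rewrite VE //; apply: ub_le_sup; last by exists P.
by exists 1 => _ [Q PsQ <-]; apply: fa_le1 => //; exact: PsP.
Qed.

Lemma V_le A x : measurable A -> (forall P, Ps P -> P A <= x) -> V A <= x.
Proof.
move=> mA h; rewrite VE //; apply: ge_sup; last by move=> _ [Q PsQ <-]; exact: h.
by case: Ps0 => P PsP0; exists (P A), P.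
Qed.

Lemma V0 : V set0 = 0.
Proof.
apply/eqP; rewrite eq_le; apply/andP; split.
  by apply: V_le => // P PsP0; rewrite fa0 //; exact: PsP.
by case: Ps0 => P PsP0; rewrite -(fa0 (PsP PsP0)); exact: V_ge.
Qed.

Lemma V_ge0 A : measurable A -> 0 <= V A.
Proof.
move=> mA; case: Ps0 => P PsP0; apply: le_trans _ (V_ge PsP0 mA).
by case: (PsP PsP0) => + _; apply.
Qed.

Lemma V_mono A B : measurable A -> measurable B -> A `<=` B -> V A <= V B.
Proof.
move=> mA mB AB; apply: V_le => // P PsP0.
apply: le_trans _ (V_ge PsP0 mB). apply: (fa_mono (PsP PsP0) mA mB AB).
Qed.

Lemma V_sub A B : measurable A -> measurable B -> V (A `|` B) <= V A + V B.
Proof.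
move=> mA mB; apply: V_le; first exact: measurableU.
move=> P PsP0; apply: le_trans (fa_sub (PsP PsP0) mA mB) _.
by apply: lerD; exact: V_ge.
Qed.

Lemma V_compl0 A : measurable A -> V (~` A) = 0 -> V A = 1.
Proof.
move=> mA h; apply/eqP; rewrite eq_le; apply/andP; split.
  by apply: V_le => // P PsP0; apply: (fa_le1 (PsP PsP0) mA).
case: Ps0 => P PsP0.
have h1 := fa_compl (PsP PsP0) mA.
have h2 := V_ge PsP0 mA.
have h3 := V_ge PsP0 (measurableC mA).
lra.
Qed.

Lemma V_null0 A B : measurable A -> measurable B -> V A = 0 -> V B = 0 ->
  V (A `|` B) = 0.
Proof.
move=> mA mB hA hB; apply/eqP; rewrite eq_le V_ge0 ?andbT; last exact: measurableU.
by have := V_sub mA mB; rewrite hA hB addr0.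
Qed.

Lemma V_null_big (F : nat -> set T) n : (forall k, measurable (F k)) ->
  (forall k, V (F k) = 0) -> V (\big[setU/set0]_(k < n) F k) = 0.
Proof.
move=> mF hF; elim: n => [|n IH]; first by rewrite big_ord0 V0.
rewrite big_ord_recr /=; apply: V_null0 => //.
exact: bigsetU_measurable.
Qed.

Hypothesis Vcb : cont_from_below V.

Lemma V_null_cup (F : nat -> set T) : (forall k, measurable (F k)) ->
  (forall k, V (F k) = 0) -> V (\bigcup_k F k) = 0.
Proof.
move=> mF hF.
have := Vcb (An := fun n => \big[setU/set0]_(k < n) F k) (A := \bigcup_k F k).
have e : (fun n => V (\big[setU/set0]_(k < n) F k)) = fun=> 0.
  by apply: funext => n; exact: V_null_big.
rewrite e => /(_ _ (bigcupT_measurable _ mF)).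
have mB : forall n, measurable (\big[setU/set0]_(k < n) F k).
  by move=> n; apply: bigsetU_measurable => k _; exact: mF.
move=> /(_ mB).
have inc : forall n, \big[setU/set0]_(k < n) F k `<=` \big[setU/set0]_(k < n.+1) F k.
  by move=> n; rewrite big_ord_recr /=; exact: subsetUl.
move=> /(_ inc).
have eq : \bigcup_n \big[setU/set0]_(k < n) F k = \bigcup_k F k.
  apply/seteqP; split.
    move=> x [n _]; rewrite -bigcup_mkord => -[k _ Fk]; by exists k.
  move=> x [k _ Fk]; exists k.+1 => //; rewrite -bigcup_mkord; exists k => //=.
move=> /(_ eq) h.
exact: (cvg_unique _ h (cvg_cst 0)).
Qed.

End UP.
Section TH.
Context {d : measure_display} {T : measurableType d} {R : realType}.
Variables (V : set T -> R) (Ps : set (set T -> R)) (theta : T -> T).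
Hypotheses (Ps0 : Ps !=set0) (PsP : forall P, Ps P -> fa_prob P)
  (VE : forall A, measurable A -> V A = sup [set P A | P in Ps]).
Hypotheses (mth : measurable_fun setT theta) (pres : preserves theta V).

Lemma mpre A : measurable A -> measurable (theta @^-1` A).
Proof. by move=> mA; have := mth measurableT mA; rewrite setTI. Qed.

Lemma preS n A : iter n.+1 theta @^-1` A = theta @^-1` (iter n theta @^-1` A).
Proof.
have e : iter n.+1 theta = (fun x => iter n theta (theta x)).
  by apply/funext => x; exact: iterSr.
by rewrite e.
Qed.

Lemma mpreN n A : measurable A -> measurable (iter n theta @^-1` A).
Proof.
move=> mA; elim: n => [|n IH] //; rewrite preS; exact: mpre.
Qed.

Lemma VpreN n A : measurable A -> V (iter n theta @^-1` A) = V A.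
Proof.
move=> mA; elim: n => [|n IH] //; rewrite preS pres //; exact: mpreN.
Qed.

Lemma inv_preN n B : Defs.invariant theta B -> iter n theta @^-1` B = B.
Proof.
move=> iB; elim: n => [|n IH] //; by rewrite preS IH iB.
Qed.

Definition Lsup (C : set T) := \bigcap_m \bigcup_n (iter (n + m) theta @^-1` C).

Lemma mLsup C : measurable C -> measurable (Lsup C).
Proof.
move=> mC; apply: bigcapT_measurable => m; apply: bigcupT_measurable => n.
exact: mpreN.
Qed.

Lemma Lsup_inv C : Defs.invariant theta (Lsup C).
Proof.
rewrite /Defs.invariant /Lsup; apply/seteqP; split => x /= h m _.
  have [n _ hn] := h m I; exists n.+1 => //=.
  by move: hn; rewrite /= -iterSr.
have [n _ hn] := h m.+1 I; exists n => //=.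
by move: hn; rewrite /= addnS iterSr.
Qed.

Lemma key_ergodic : (forall B, measurable B -> Defs.invariant theta B ->
  V B = 0 \/ V (~` B) = 0) -> ergodic theta V.
Proof.
move=> h B mB iB; case: (h B mB iB) => e.
  by split; left.
by split; right => //; exact: (V_compl0 Ps0 PsP VE mB e).
Qed.

Lemma pos_or0 A : measurable A -> V A = 0 \/ 0 < V A.
Proof.
move=> mA; have := V_ge0 Ps0 PsP VE mA; rewrite le_eqVlt => /orP [/eqP <-|->];
  by [left|right].
Qed.

Lemma iv_i : cond_iv theta V -> ergodic theta V.
Proof.
move=> hiv; apply: key_ergodic => B mB iB.
case: (pos_or0 mB) => [->|pB]; first by left.
case: (pos_or0 (measurableC mB)) => [->|pC]; first by right.
have [n [_ hn]] := hiv B (~` B) mB (measurableC mB) pB pC.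
by move: hn; rewrite inv_preN // setICr (V0 Ps0 PsP VE) ltxx.
Qed.

Lemma ii_i : cond_ii theta V -> ergodic theta V.
Proof.
move=> hii; apply: key_ergodic => B mB iB; apply: hii => //.
rewrite iB /symdiff setDv setU0; exact: (V0 Ps0 PsP VE).
Qed.

Hypothesis Vcb : cont_from_below V.

Lemma i_ii : ergodic theta V -> cond_ii theta V.
Proof.
move=> erg B mB hD.
set D := symdiff (theta @^-1` B) B.
have mD : measurable D.
  by apply: measurableU; apply: measurableD => //; exact: mpre.
set N := \bigcup_k (iter k theta @^-1` D).
have mN : measurable N by apply: bigcupT_measurable => k; exact: mpreN.
have VN : V N = 0.
  apply: (V_null_cup Ps0 PsP VE Vcb) => k; first exact: mpreN.
  by rewrite VpreN.
have good : forall x, ~ N x -> forall n, (B (iter n theta x) <-> B x).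
  move=> x Nx; elim=> [//|n IH]; rewrite -IH.
  have : ~ D (iter n theta x) by move=> Dx; apply: Nx; exists n.
  rewrite /D /symdiff /= => nD.
  split => h; apply: contrapT => h'; apply: nD.
    by rewrite /setU /setD /=; left.
  by rewrite /setU /setD /=; right.
have mL := mLsup mB.
have [e|e] := (erg _ mL (Lsup_inv B)).2.
- left; apply/eqP; rewrite eq_le (V_ge0 Ps0 PsP VE) // andbT.
  have : V B <= V (Lsup B `|` N).
    apply: (V_mono Ps0 PsP VE) => //; first exact: measurableU.
    move=> x Bx; have [Nx|Nx] := pselect (N x); [by right|left].
    move=> m _; exists 0 => //=; rewrite add0n; apply/(good x Nx) => //.
  move=> /le_trans; apply; have := V_sub Ps0 PsP VE mL mN; rewrite e VN addr0 //.
- right; apply/eqP; rewrite eq_le (V_ge0 Ps0 PsP VE) ?andbT; last exact: measurableC.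
  have : V (~` B) <= V (~` Lsup B `|` N).
    apply: (V_mono Ps0 PsP VE); [exact: measurableC | exact/measurableU/mN/measurableC |].
    move=> x nBx; have [Nx|Nx] := pselect (N x); [by right|left].
    move=> hL; apply: nBx; have [n _ hn] := hL 0 I.
    by apply/(good x Nx (n + 0)).
  move=> /le_trans; apply; have := V_sub Ps0 PsP VE (measurableC mL) mN.
  by rewrite e VN addr0.
Qed.

Lemma iii_iv : cond_iii theta V -> cond_iv theta V.
Proof.
move=> hiii A B mA mB pA pB; apply: contrapT => hne.
have z : forall k, V (iter k.+1 theta @^-1` A `&` B) = 0.
  move=> k; have mk : measurable (iter k.+1 theta @^-1` A `&` B).
    by apply: measurableI => //; exact: mpreN.
  case: (pos_or0 mk) => // pk; exfalso; apply: hne; by exists k.+1.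
set U := \bigcup_(n in [set n : nat | (0 < n)%N]) (iter n theta @^-1` A).
have mU : measurable U by apply: bigcup_measurable => k _; exact: mpreN.
set G := \bigcup_k (iter k.+1 theta @^-1` A `&` B).
have mG : measurable G.
  by apply: bigcupT_measurable => k; apply: measurableI => //; exact: mpreN.
have VG : V G = 0.
  apply: (V_null_cup Ps0 PsP VE Vcb) => // k.
  by apply: measurableI => //; exact: mpreN.
have : V B <= V (~` U `|` G).
  apply: (V_mono Ps0 PsP VE) => //; first exact/measurableU/mG/measurableC.
  move=> x Bx; have [Ux|Ux] := pselect (U x); [right|by left].
  case: Ux => -[//|k] _ hk; by exists k.
have := V_sub Ps0 PsP VE (measurableC mU) mG.
rewrite hiii // VG addr0 => h1 h2.
by have := le_trans h2 h1; rewrite leNgt pB.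
Qed.

Lemma ii_iii : cont_from_above V -> cond_ii theta V -> cond_iii theta V.
Proof.
move=> Vca hii A mA pA.
set C := theta @^-1` A.
have mC : measurable C by exact: mpre.
set Um := fun m => \bigcup_n (iter (n + m) theta @^-1` C).
have mUm : forall m, measurable (Um m).
  by move=> m; apply: bigcupT_measurable => n; exact: mpreN.
have UmE : forall m, Um m = iter m theta @^-1` (Um 0).
  move=> m; apply/seteqP; split => x /= [n _ hn]; exists n => //.
    by move: hn; rewrite /= addn0 iterD.
  by move: hn; rewrite /= addn0 iterD.
have VUm : forall m, V (Um m) = V (Um 0).
  by move=> m; rewrite UmE VpreN.
have dec : forall m, Um m.+1 `<=` Um m.
  move=> m x [n _ hn]; exists n.+1 => //.
  by have -> : (n.+1 + m = n + m.+1)%N by rewrite addSn addnS.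
have mL := mLsup mC.
have := Vca Um (Lsup C) mUm mL dec erefl.
have -> : (fun n => V (Um n)) = fun=> V (Um 0) by apply: funext => n; exact: VUm.
move=> h; have eL : V (Lsup C) = V (Um 0) by exact: (cvg_unique _ h (cvg_cst _)).
have pL : 0 < V (Lsup C).
  rewrite eL; apply: (lt_le_trans pA).
  have -> : V A = V (iter 0 theta @^-1` C) by rewrite /= pres.
  apply: (V_mono Ps0 PsP VE); [exact: mpreN|exact: mUm|].
  by move=> x hx; exists 0.
have hD : V (symdiff (theta @^-1` Lsup C) (Lsup C)) = 0.
  rewrite (Lsup_inv C) /symdiff setDv setU0; exact: (V0 Ps0 PsP VE).
have [e|e] := hii _ mL hD.
- by move: pL; rewrite e ltxx.
- apply/eqP; rewrite eq_le (V_ge0 Ps0 PsP VE) ?andbT.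
    rewrite -e; apply: (V_mono Ps0 PsP VE).
    + by apply: measurableC; apply: bigcup_measurable => k _; exact: mpreN.
    + exact: measurableC.
    + apply: subsetC => x hx; have [n _ hn] := hx 0 I.
      by exists n.+1 => //; move: hn; rewrite /= addn0.
  by apply: measurableC; apply: bigcup_measurable => k _; exact: mpreN.
Qed.

End TH.

Theorem theorem4 (d : measure_display) (T : measurableType d) (R : realType)
  (V : set T -> R) (theta : T -> T) :
  upper_probability V -> cont_from_below V ->
  measurable_fun setT theta -> preserves theta V ->
  ((ergodic theta V <-> cond_ii theta V) /\
   (cond_iii theta V -> cond_iv theta V) /\
   (cond_iv theta V -> ergodic theta V) /\
   (continuous_capacity V -> cond_ii theta V -> cond_iii theta V)).
Proof.
move=> [Ps [Ps0 [PsP VE]]] Vcb mth pres.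
split; [split|split; [|split]].
- by apply: (i_ii Ps0 PsP VE).
- by apply: (ii_i Ps0 PsP VE).
- by apply: (iii_iv Ps0 PsP VE).
- by apply: (iv_i Ps0 PsP VE).
- by move=> [_ Vca]; apply: (ii_iii Ps0 PsP VE).
Qed.
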